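(* Let $H$ be a complex Hilbert space, $A\in B(H)$ a nonzero positive semidefinite operator, and $T\in B_{A^{1/2}}(H)$. Let $T_b$ be the operator on $\mathbf{R}(A^{1/2})$ given by $T_b(A^{1/2}x)=A^{1/2}Tx$, $x\in H$. Then $$\|T_b\|_{\mathbf{R}(A^{1/2})}=\|(T^{\diamond})^{\diamond}\|=\|T^{\diamond}\|_A,$$ where $\|(T^\diamond)^\diamond\|$ is the usual operator norm on $H$.
   Context: $\|x\|_A=\langle Ax,x\rangle^{1/2}$. For $S\in B(H)$, $\|S\|_A=\sup\{\|Sx\|_A : x\in\overline{R(A)},\ \|x\|_A=1\}$. $B_{A^{1/2}}(H)=\{S\in B(H): R(S^*A^{1/2})\subset R(A^{1/2})\}$. For $S\in B_{A^{1/2}}(H)$, $S^{\diamond}$ is the unique operator in $B(H)$ with $S^*A^{1/2}=A^{1/2}S^{\diamond}$ and $R(S^{\diamond})\subset\overline{R(A^{1/2})}$; $S^\diamond\in B_{A^{1/2}}(H)$. $P$ is the orthogonal projection onto $\overline{R(A)}$, and $\mathbf{R}(A^{1/2})$ is the Hilbert space $R(A^{1/2})$ with inner product $(A^{1/2}x,A^{1/2}y)=\langle Px,Py\rangle$. *)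

(* Defs.v *)
From HB Require Import structures.
From mathcomp Require Import all_boot all_order all_algebra.
From mathcomp Require Import classical_sets boolp reals.
From mathcomp Require Import complex.
From Stdlib Require Import ClassicalEpsilon.
Set Implicit Arguments. Unset Strict Implicit. Unset Printing Implicit Defensive.
Import Order.TTheory GRing.Theory Num.Theory.
Local Open Scope ring_scope.
Local Open Scope classical_set_scope.

Section Hilbert.
Variables (R : realType) (H : lmodType R[i]) (ip : H -> H -> R[i]).

Definition hnorm (x : H) : R := Num.sqrt (@complex.Re R (ip x x)).

Definition is_hilbert : Prop :=
  [/\ (forall (a : R[i]) (x y z : H), ip (a *: x + y) z = a * ip x z + ip y z),
      (forall x y : H, ip y x = conjc (ip x y)),
      (forall x : H, 0 <= ip x x),
      (forall x : H, ip x x = 0 -> x = 0) &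
      (forall u : nat -> H,
         (forall e : R, 0 < e -> exists N : nat, forall m n : nat,
            (N <= m)%N -> (N <= n)%N -> hnorm (u m - u n) < e) ->
         exists l : H, forall e : R, 0 < e -> exists N : nat,
            forall n : nat, (N <= n)%N -> hnorm (u n - l) < e)].

Definition bounded_op (T : H -> H) : Prop :=
  (forall (a : R[i]) (x y : H), T (a *: x + y) = a *: T x + T y) /\
  exists M : R, forall x : H, hnorm (T x) <= M * hnorm x.

Definition positive_op (A : H -> H) : Prop :=
  bounded_op A /\ forall x : H, 0 <= ip (A x) x.

Definition opnorm (S : H -> H) : R :=
  sup [set hnorm (S x) | x in [set x : H | hnorm x <= 1]].

Definition adj (S : H -> H) : H -> H :=
  epsilon (inhabits S) (fun S' => bounded_op S' /\
    forall x y : H, ip (S x) y = ip x (S' y)).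

Definition sqrt_op (A : H -> H) : H -> H :=
  epsilon (inhabits A) (fun S => positive_op S /\ forall x, S (S x) = A x).

Definition hclosure (E : set H) : set H :=
  [set x | forall e : R, 0 < e -> exists2 y, E y & hnorm (x - y) < e].

Definition projR (A : H -> H) : H -> H :=
  epsilon (inhabits A) (fun P => bounded_op P /\ forall x : H,
    hclosure (range A) (P x) /\
    forall y, hclosure (range A) y -> ip (x - P x) y = 0).

Definition Anorm (A : H -> H) (x : H) : R := Num.sqrt (@complex.Re R (ip (A x) x)).

Definition Aopnorm (A S : H -> H) : R :=
  sup [set Anorm A (S x) | x in
        [set x | hclosure (range A) x /\ Anorm A x = 1]].

Definition in_BAhalf (A S : H -> H) : Prop :=
  bounded_op S /\
  forall x, exists y, adj S (sqrt_op A x) = sqrt_op A y.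

Definition diamond (A S : H -> H) : H -> H :=
  epsilon (inhabits S) (fun S' => bounded_op S' /\
    (forall x, adj S (sqrt_op A x) = sqrt_op A (S' x)) /\
    (forall x, hclosure (range (sqrt_op A)) (S' x))).

(* The Hilbert space R(A^{1/2}): a chosen preimage of u under A^{1/2} *)
Definition preimg (A : H -> H) (u : H) : H :=
  epsilon (inhabits u) (fun x => sqrt_op A x = u).

(* norm of R(A^{1/2}): ||A^{1/2} x||_R = ||P x|| (well defined) *)
Definition Rnorm (A : H -> H) (u : H) : R := hnorm (projR A (preimg A u)).

Definition Tb (A T : H -> H) (u : H) : H := sqrt_op A (T (preimg A u)).

Definition Tb_norm (A T : H -> H) : R :=
  sup [set Rnorm A (Tb A T u) | u in
        [set u | range (sqrt_op A) u /\ Rnorm A u <= 1]].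

End Hilbert.

(* Main.v *)
Require Import Defs.
From HB Require Import structures.
From mathcomp Require Import all_boot all_order all_algebra.
From mathcomp Require Import classical_sets boolp reals.
From mathcomp Require Import complex.
From mathcomp Require Import ring lra.
Import Order.TTheory GRing.Theory Num.Theory.
Local Open Scope ring_scope.
Set Implicit Arguments. Unset Strict Implicit. Unset Printing Implicit Defensive.

Section Basic.
Variables (R : realType) (H : lmodType R[i]) (ip : H -> H -> R[i]).
Hypothesis hH : is_hilbert ip.

Definition re (x y : H) : R := complex.Re (ip x y).
Local Notation hn := (hnorm ip).

Lemma ipL a x y z : ip (a *: x + y) z = a * ip x z + ip y z.
Proof. by case: hH => h _ _ _ _; apply: h. Qed.
Lemma ipC x y : ip y x = conjc (ip x y).
Proof. by case: hH => _ h _ _ _; apply: h. Qed.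
Lemma ipge0 x : 0 <= ip x x.
Proof. by case: hH => _ _ h _ _; apply: h. Qed.
Lemma ipdef x : ip x x = 0 -> x = 0.
Proof. by case: hH => _ _ _ h _; apply: h. Qed.

Lemma ip0l z : ip 0 z = 0.
Proof.
have := ipL 1 0 0 z; rewrite scale1r addr0 mul1r.
by move/(congr1 (fun t => t - ip 0 z)); rewrite subrr addrK => <-.
Qed.
Lemma ipDl x y z : ip (x + y) z = ip x z + ip y z.
Proof. by rewrite -[x]scale1r ipL mul1r scale1r. Qed.
Lemma ipZl a x z : ip (a *: x) z = a * ip x z.
Proof. by rewrite -[a *: x]addr0 ipL ip0l addr0. Qed.
Lemma ipNl x z : ip (- x) z = - ip x z.
Proof. by rewrite -scaleN1r ipZl mulN1r. Qed.
Lemma ipBl x y z : ip (x - y) z = ip x z - ip y z.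
Proof. by rewrite ipDl ipNl. Qed.
Lemma ip0r z : ip z 0 = 0.
Proof. by rewrite ipC ip0l conjc0. Qed.
Lemma ipDr x y z : ip z (x + y) = ip z x + ip z y.
Proof. by rewrite ipC ipDl rmorphD [ip z x]ipC [ip z y]ipC. Qed.
Lemma ipZr a x z : ip z (a *: x) = conjc a * ip z x.
Proof. by rewrite ipC ipZl rmorphM [ip z x]ipC. Qed.
Lemma ipNr x z : ip z (- x) = - ip z x.
Proof. by rewrite ipC ipNl rmorphN [ip z x]ipC. Qed.
Lemma ipBr x y z : ip z (x - y) = ip z x - ip z y.
Proof. by rewrite ipDr ipNr. Qed.

Lemma Re_conj (z : R[i]) : complex.Re (conjc z) = complex.Re z.
Proof. by case: z. Qed.
Lemma Im_conj (z : R[i]) : complex.Im (conjc z) = - complex.Im z.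
Proof. by case: z. Qed.
Lemma ReD (z w : R[i]) : complex.Re (z + w) = complex.Re z + complex.Re w.
Proof. by case: z; case: w. Qed.
Lemma ImD (z w : R[i]) : complex.Im (z + w) = complex.Im z + complex.Im w.
Proof. by case: z; case: w. Qed.
Lemma ReN (z : R[i]) : complex.Re (- z) = - complex.Re z.
Proof. by case: z. Qed.
Lemma ImN (z : R[i]) : complex.Im (- z) = - complex.Im z.
Proof. by case: z. Qed.
Lemma ReM (z w : R[i]) : complex.Re (z * w) = complex.Re z * complex.Re w - complex.Im z * complex.Im w.
Proof. by case: z; case: w. Qed.
Lemma ImM (z w : R[i]) : complex.Im (z * w) = complex.Re z * complex.Im w + complex.Im z * complex.Re w.
Proof. by case: z => a b; case: w => c d /=; lra. Qed.
Lemma Re0 : complex.Re (0 : R[i]) = 0. Proof. by []. Qed.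
Lemma Im0 : complex.Im (0 : R[i]) = 0. Proof. by []. Qed.

Lemma reC x y : re x y = re y x.
Proof. by rewrite /re ipC Re_conj. Qed.
Lemma reDl x y z : re (x + y) z = re x z + re y z.
Proof. by rewrite /re ipDl ReD. Qed.
Lemma reDr x y z : re z (x + y) = re z x + re z y.
Proof. by rewrite /re ipDr ReD. Qed.
Lemma reNl x z : re (- x) z = - re x z.
Proof. by rewrite /re ipNl ReN. Qed.
Lemma reNr x z : re z (- x) = - re z x.
Proof. by rewrite /re ipNr ReN. Qed.
Lemma reBl x y z : re (x - y) z = re x z - re y z.
Proof. by rewrite reDl reNl. Qed.
Lemma reBr x y z : re z (x - y) = re z x - re z y.
Proof. by rewrite reDr reNr. Qed.
Lemma re0l z : re 0 z = 0. Proof. by rewrite /re ip0l. Qed.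
Lemma re0r z : re z 0 = 0. Proof. by rewrite /re ip0r. Qed.
Lemma reZl (r : R) x z : re ((r%:C)%C *: x) z = r * re x z.
Proof. by rewrite /re ipZl ReM /= mul0r subr0. Qed.
Lemma reZr (r : R) x z : re z ((r%:C)%C *: x) = r * re z x.
Proof. by rewrite /re ipZr ReM /= oppr0 mul0r subr0. Qed.
Lemma reil x z : re ('i%C *: x) z = - complex.Im (ip x z).
Proof. by rewrite /re ipZl ReM /= mul0r mul1r sub0r. Qed.
Lemma reir x z : re z ('i%C *: x) = complex.Im (ip z x).
Proof. by rewrite /re ipZr ReM /= mul0r mulN1r sub0r opprK. Qed.

Lemma ip_decomp x y : ip x y = Complex (re x y) (re x ('i%C *: y)).
Proof. by rewrite reir /re; case: (ip x y). Qed.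

Lemma re_ge0 x : 0 <= re x x.
Proof. by have := ipge0 x; rewrite lecE => /andP[]. Qed.
Lemma Im_ipxx x : complex.Im (ip x x) = 0.
Proof. by have := ipge0 x; rewrite lecE => /andP[/eqP ->]. Qed.
Lemma re_eq0 x : re x x = 0 -> x = 0.
Proof.
move=> h; apply: ipdef; move: h (Im_ipxx x); rewrite /re.
by case: (ip x x) => a b /= -> ->.
Qed.

Lemma hn_ge0 x : 0 <= hn x. Proof. exact: sqrtr_ge0. Qed.
Lemma hn_sq x : hn x ^+ 2 = re x x.
Proof. by rewrite /hnorm sqr_sqrtr // re_ge0. Qed.
Lemma hn_eq0 x : hn x = 0 -> x = 0.
Proof. by move=> h; apply: re_eq0; rewrite -hn_sq h expr0n. Qed.
Lemma hn0 : hn 0 = 0.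
Proof. by rewrite /hnorm -/(re 0 0) re0l sqrtr0. Qed.

Lemma quad_le (a b c : R) : 0 <= c -> (forall t : R, 0 <= a + 2 * b * t + c * t ^+ 2) ->
  b ^+ 2 <= a * c.
Proof.
move=> c0 h; case: (ltrP 0 c) => cp.
  have := h (- b / c).
  have -> : a + 2 * b * (- b / c) + c * (- b / c) ^+ 2 = a - b ^+ 2 / c.
    by field; rewrite lt0r_neq0.
  by rewrite subr_ge0 ler_pdivrMr // mulrC.
have c00 : c = 0 by apply/le_anti/andP.
rewrite c00 mulr0; case: (eqVneq b 0) => [->|bn]; first by rewrite expr0n.
exfalso; have := h (- (a + 1) / (2 * b)); rewrite c00 mul0r addr0.
have -> : 2 * b * (- (a + 1) / (2 * b)) = - (a + 1).
  by field.
lra.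
Qed.

Lemma sq_le_abs (a b : R) : 0 <= b -> a ^+ 2 <= b ^+ 2 -> `|a| <= b.
Proof.
move=> b0 h; rewrite -(ler_pXn2r (n:=2)) // ?nnegrE //.
by rewrite real_normK ?num_real.
Qed.
Lemma sq_le (a b : R) : 0 <= a -> 0 <= b -> a ^+ 2 <= b ^+ 2 -> a <= b.
Proof. by move=> a0 b0 h; rewrite -(ler_pXn2r (n:=2)) // ?nnegrE. Qed.

Lemma sq_le_lt (a b : R) : 0 <= a -> 0 <= b -> a ^+ 2 < b ^+ 2 -> a < b.
Proof. by move=> a0 b0 h; rewrite -(ltr_pXn2r (n:=2)) // ?nnegrE. Qed.

Lemma re_sqD (x y : H) (t : R) :
  re (x + (t%:C)%C *: y) (x + (t%:C)%C *: y) = re x x + 2 * re x y * t + re y y * t ^+ 2.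
Proof.
rewrite !reDl !reDr !reZl !reZr [re y x]reC; ring.
Qed.

Lemma CS_sq x y : re x y ^+ 2 <= re x x * re y y.
Proof.
apply: quad_le; first exact: re_ge0.
by move=> t; rewrite -re_sqD re_ge0.
Qed.

Lemma CS x y : `|re x y| <= hn x * hn y.
Proof.
apply: sq_le_abs; first by rewrite mulr_ge0 ?hn_ge0.
by rewrite exprMn !hn_sq CS_sq.
Qed.
Lemma CS' x y : re x y <= hn x * hn y.
Proof. exact: ler_normlW (CS x y). Qed.

Lemma hn_sqD x y : hn (x + y) ^+ 2 = hn x ^+ 2 + 2 * re x y + hn y ^+ 2.
Proof. by rewrite !hn_sq !reDl !reDr [re y x]reC; ring. Qed.
Lemma hn_sqB x y : hn (x - y) ^+ 2 = hn x ^+ 2 - 2 * re x y + hn y ^+ 2.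
Proof. by rewrite !hn_sq !reBl !reBr [re y x]reC; ring. Qed.

Lemma hn_triangle x y : hn (x + y) <= hn x + hn y.
Proof.
apply: sq_le; rewrite ?addr_ge0 ?hn_ge0 //.
rewrite hn_sqD; have := CS' x y; nra.
Qed.

Definition cabs (a : R[i]) : R := Num.sqrt (complex.Re a ^+ 2 + complex.Im a ^+ 2).

Lemma hnZ a x : hn (a *: x) = cabs a * hn x.
Proof.
rewrite /hnorm /cabs -sqrtrM ?addr_ge0 ?sqr_ge0 //; congr Num.sqrt.
rewrite ipZl ipZr mulrA ReM ImM -/(re x x) Im_ipxx.
case: a => a b /=; ring.
Qed.

Lemma cabsR (r : R) : cabs (r%:C)%C = `|r|.
Proof. by rewrite /cabs /= expr0n /= addr0 sqrtr_sqr. Qed.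
Lemma cabsi : cabs 'i%C = 1.
Proof. by rewrite /cabs /= expr0n expr1n add0r sqrtr1. Qed.
Lemma cabsN1 : cabs (-1) = 1.
Proof. by rewrite /cabs /= oppr0 expr0n addr0 sqrrN expr1n sqrtr1. Qed.

Lemma hnR (r : R) x : hn ((r%:C)%C *: x) = `|r| * hn x.
Proof. by rewrite hnZ cabsR. Qed.
Lemma hnN x : hn (- x) = hn x.
Proof. by rewrite -scaleN1r hnZ cabsN1 mul1r. Qed.
Lemma hni x : hn ('i%C *: x) = hn x.
Proof. by rewrite hnZ cabsi mul1r. Qed.
Lemma hnBC x y : hn (x - y) = hn (y - x).
Proof. by rewrite -hnN opprB. Qed.
Lemma hn_triangleB x y z : hn (x - z) <= hn (x - y) + hn (y - z).
Proof. by have := hn_triangle (x - y) (y - z); rewrite addrA subrK. Qed.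


Lemma le_of_eps (a b : R) : (forall e, 0 < e -> a <= b + e) -> a <= b.
Proof.
move=> h; case: (lerP a b) => // ba; exfalso.
have := h ((a - b) / 2); rewrite divr_gt0 ?subr_gt0 // => /(_ isT); lra.
Qed.

Lemma le_of_epsC (a b C : R) : 0 <= C ->
  (forall e, 0 < e -> e <= 1 -> a <= b + C * e) -> a <= b.
Proof.
move=> C0 h; apply: le_of_eps => e e0.
pose f := Num.min 1 (e / (C + 1)).
have f0 : 0 < f by rewrite lt_min ltr01 divr_gt0 //; lra.
have f1 : f <= 1 by rewrite ge_min lexx.
have fe : C * f <= e.
  have : f <= e / (C + 1) by rewrite ge_min lexx orbT.
  rewrite ler_pdivlMr; last lra.
  move=> hf; have : 0 <= C * f by rewrite mulr_ge0 // ltW. nra.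
by apply: le_trans (h f f0 f1) _; rewrite lerD2l.
Qed.

Lemma archi_inv (e : R) : 0 < e -> exists N : nat, forall n, (N <= n)%N -> (n.+1%:R)^-1 < e.
Proof.
move=> e0; have hpos : 0 <= e^-1 by rewrite invr_ge0 ltW.
have hb := archi_boundP hpos.
exists (Num.Def.archi_bound e^-1) => n hn.
rewrite -(invrK e) ltf_pV2 ?posrE ?invr_gt0 ?ltr0Sn //.
apply: lt_le_trans hb _; rewrite ler_nat; exact: leqW.
Qed.

Lemma sup_ub (E : set R) (M x : R) : (forall y, E y -> y <= M) -> E x -> x <= sup E.
Proof. by move=> hM Ex; apply: ub_le_sup => //; exists M. Qed.
Lemma sup_le (E : set R) (M : R) : (exists x, E x) -> (forall y, E y -> y <= M) -> sup E <= M.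
Proof. by move=> [x Ex] hM; apply: ge_sup => //; exists x. Qed.
Lemma sup_adh (E : set R) (M e : R) : (exists x, E x) -> (forall y, E y -> y <= M) ->
  0 < e -> exists2 y, E y & sup E - e < y.
Proof. by move=> [x Ex] hM e0; apply: sup_adherent => //; split; [exists x | exists M]. Qed.
Lemma inf_lb (E : set R) (M x : R) : (forall y, E y -> M <= y) -> E x -> inf E <= x.
Proof. by move=> hM Ex; apply: ge_inf => //; exists M. Qed.
Lemma inf_ge (E : set R) (M : R) : (exists x, E x) -> (forall y, E y -> M <= y) -> M <= inf E.
Proof. by move=> [x Ex] hM; apply: lb_le_inf => //; exists x. Qed.
Lemma inf_adh (E : set R) (M e : R) : (exists x, E x) -> (forall y, E y -> M <= y) ->
  0 < e -> exists2 y, E y & y < inf E + e.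
Proof.
move=> [x Ex] hM e0; apply: inf_adherent => //; split; first by exists x.
by exists M.
Qed.

Definition conv (u : nat -> H) (l : H) :=
  forall e : R, 0 < e -> exists N : nat, forall n, (N <= n)%N -> hn (u n - l) < e.
Definition cauchy (u : nat -> H) :=
  forall e : R, 0 < e -> exists N : nat, forall m n : nat,
    (N <= m)%N -> (N <= n)%N -> hn (u m - u n) < e.

Lemma complete u : cauchy u -> exists l, conv u l.
Proof. by case: hH => _ _ _ _ h; apply: h. Qed.

Definition hclosed (K : set H) :=
  forall x, (forall e : R, 0 < e -> exists2 y, K y & hn (x - y) < e) -> K x.

Lemma hclosure_closed E : hclosed (hclosure ip E).
Proof.
move=> x hx e e0; have e20 : 0 < e / 2 by rewrite divr_gt0.
have [y hy hxy] := hx _ e20; have [z hz hyz] := hy _ e20.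
exists z => //; apply: le_lt_trans (hn_triangleB x y z) _; lra.
Qed.
Lemma sub_hclosure (E : set H) x : E x -> hclosure ip E x.
Proof. by move=> Ex e e0; exists x => //; rewrite subrr hn0. Qed.
Lemma hclosure_mono (E F : set H) x : (forall y, E y -> F y) -> hclosure ip E x -> hclosure ip F x.
Proof. by move=> EF hx e e0; have [y /EF Fy h] := hx e e0; exists y. Qed.
Lemma hclosure_min (E F : set H) x : hclosed F -> (forall y, E y -> F y) -> hclosure ip E x -> F x.
Proof. by move=> cF EF hx; apply: cF; apply: hclosure_mono hx. Qed.

Lemma conv_closed (K : set H) u l : hclosed K -> (forall n, K (u n)) -> conv u l -> K l.
Proof.
move=> cK Ku ul; apply: cK => e e0; have [N hN] := ul e e0.
by exists (u N) => //; rewrite hnBC; apply: hN.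
Qed.

Definition rsubspace (K : set H) :=
  [/\ K 0, (forall x y, K x -> K y -> K (x + y)) & (forall (r : R) x, K x -> K ((r%:C)%C *: x))].

Lemma rsub_opp K x : rsubspace K -> K x -> K (- x).
Proof.
case=> _ _ hZ Kx; have := hZ (-1) x Kx.
suff -> : ((-1 : R)%:C)%C = -1 :> R[i] by rewrite scaleN1r.
by rewrite rmorphN rmorph1.
Qed.
Lemma rsub_sub K x y : rsubspace K -> K x -> K y -> K (x - y).
Proof. by move=> hK Kx Ky; case: (hK) => _ hD _; apply: hD => //; apply: rsub_opp. Qed.

Lemma projection_thm (K : set H) x : rsubspace K -> hclosed K ->
  exists p, K p /\ forall y, K y -> re (x - p) y = 0.
Proof.
move=> hK cK; have [K0 KD KZ] := hK.
pose D : set R := fun r => exists2 y, K y & r = hn (x - y) ^+ 2.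
have D0 : exists r, D r by exists (hn (x - 0) ^+ 2); exists 0.
have Dlb : forall r, D r -> 0 <= r by move=> r [y _ ->]; rewrite sqr_ge0.
pose d := inf D.
have dle : forall y, K y -> d <= hn (x - y) ^+ 2.
  by move=> y Ky; apply: (inf_lb Dlb); exists y.
have d0 : 0 <= d by apply: inf_ge.
have hseq : forall n : nat, exists y, K y /\ hn (x - y) ^+ 2 < d + (n.+1%:R)^-1.
  move=> n; have hp : 0 < (n.+1%:R : R)^-1 by rewrite invr_gt0 ltr0Sn.
  have [r [y Ky ->] hr] := inf_adh D0 Dlb hp.
  by exists y.
have [yn hyn] := choice hseq.
(* parallelogram estimate *)
have para : forall m n, hn (yn m - yn n) ^+ 2 <= 2 * (m.+1%:R)^-1 + 2 * (n.+1%:R)^-1.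
  move=> m n; have [Km hm] := hyn m; have [Kn hn'] := hyn n.
  have Kmid : K (((2^-1 : R)%:C)%C *: (yn m + yn n)) by apply: KZ; apply: KD.
  have := dle _ Kmid.
  move: hm hn'; rewrite !hn_sq.
  do 3 rewrite ?reBl ?reBr ?reDl ?reDr ?reZl ?reZr.
  rewrite [re (yn m) x]reC [re (yn n) x]reC [re (yn n) (yn m)]reC.
  set s := (m.+1%:R)^-1; set t := (n.+1%:R)^-1; move=> h1 h2 h3; lra.
have ycauchy : cauchy yn.
  move=> e e0; have e20 : 0 < e ^+ 2 / 4 by rewrite divr_gt0 ?exprn_gt0.
  have [N hN] := archi_inv e20; exists N => m n hm hnn.
  apply: sq_le_lt; [exact: hn_ge0 | exact: ltW |].
  have := para m n; have := hN m hm; have := hN n hnn.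
  set s := (m.+1%:R)^-1; set t := (n.+1%:R)^-1; lra.
have [p hp] := complete ycauchy.
have Kp : K p := conv_closed cK (fun n => (hyn n).1) hp.
have hpd : hn (x - p) ^+ 2 <= d.
  apply: (@le_of_epsC _ _ (2 * d + 6)); first lra.
  move=> e e0 e1; have [N1 hN1] := hp e e0; have [N2 hN2] := archi_inv e0.
  pose n := maxn N1 N2.
  have h1 := hN1 n (leq_maxl _ _); have h2 := hN2 n (leq_maxr _ _).
  have [_ h3] := hyn n.
  have h4 := hn_triangleB x (yn n) p.
  set a := hn (x - yn n) in h3 h4; set b := hn (yn n - p) in h1 h4.
  set c := hn (x - p) in h4 *.
  have a0 : 0 <= a := hn_ge0 _. have c0 : 0 <= c := hn_ge0 _.
  have b0 : 0 <= b := hn_ge0 _.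
  set s := (n.+1%:R)^-1 in h2 h3.
  have hc : c ^+ 2 <= (a + e) ^+ 2 by apply: lerXn2r; rewrite ?nnegrE; lra.
  have ha : a <= 2 + d by nra.
  nra.
exists p; split => // y Ky.
have hq : forall t : R, 0 <= 0 + 2 * (- re (x - p) y) * t + re y y * t ^+ 2.
  move=> t; have := dle _ (KD _ _ Kp (KZ t _ Ky)).
  have -> : x - (p + (t%:C)%C *: y) = (x - p) + ((- t)%:C)%C *: y.
    by rewrite rmorphN scaleNr opprD addrA.
  rewrite hn_sq re_sqD -hn_sq; move: hpd; set u := re (x - p) y; nra.
have := quad_le (re_ge0 y) hq; rewrite mul0r sqrrN => h.
by apply/eqP; rewrite -sqrf_eq0 eq_le h sqr_ge0.
Qed.

Definition linop (S : H -> H) := forall (a : R[i]) x y, S (a *: x + y) = a *: S x + S y.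

Lemma lin0 S : linop S -> S 0 = 0.
Proof.
move=> hS; have := hS 1 0 0; rewrite scale1r addr0 scale1r.
by move/(congr1 (fun t => t - S 0)); rewrite subrr addrK => <-.
Qed.
Lemma linD S : linop S -> forall x y, S (x + y) = S x + S y.
Proof. by move=> hS x y; have := hS 1 x y; rewrite !scale1r. Qed.
Lemma linZ S : linop S -> forall a x, S (a *: x) = a *: S x.
Proof. by move=> hS a x; have := hS a x 0; rewrite (lin0 hS) !addr0. Qed.
Lemma linN S : linop S -> forall x, S (- x) = - S x.
Proof. by move=> hS x; rewrite -scaleN1r linZ // scaleN1r. Qed.
Lemma linB S : linop S -> forall x y, S (x - y) = S x - S y.
Proof. by move=> hS x y; rewrite linD // linN. Qed.

Lemma bounded_pos S : bounded_op ip S ->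
  linop S /\ exists M, 0 <= M /\ forall x, hn (S x) <= M * hn x.
Proof.
case=> hl [M hM]; split => //; exists (Num.max M 0); split; first by rewrite le_max lexx orbT.
move=> x; apply: le_trans (hM x) _; apply: ler_wpM2r; first exact: hn_ge0.
by rewrite le_max lexx.
Qed.

Lemma ip_inj_r u v : (forall x, ip x u = ip x v) -> u = v.
Proof.
move=> h; apply/eqP; rewrite -subr_eq0; apply/eqP; apply: ipdef.
by rewrite ipBr h subrr.
Qed.

Lemma re_iswap a b : re a ('i%C *: b) = re ((- 'i%C) *: a) b.
Proof. by rewrite reir /re ipZl; case: (ip a b) => u v /=; ring. Qed.

Definition csubspace (K : set H) :=
  K 0 /\ forall (a : R[i]) x y, K x -> K y -> K (a *: x + y).

Lemma csub_rsub K : csubspace K -> rsubspace K.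
Proof.
case=> K0 hK; split => //.
- by move=> x y Kx Ky; rewrite -[x]scale1r; apply: hK.
- by move=> r x Kx; rewrite -[_ *: x]addr0; apply: hK.
Qed.

Lemma proj_unique (K : set H) x p q : csubspace K -> K p -> K q ->
  (forall y, K y -> ip (x - p) y = 0) -> (forall y, K y -> ip (x - q) y = 0) -> p = q.
Proof.
move=> hK Kp Kq hp hq; have Kqp : K (q - p) by apply: rsub_sub => //; apply: csub_rsub.
apply/eqP; rewrite eq_sym -subr_eq0; apply/eqP; apply: ipdef.
have e : q - p = (x - p) - (x - q) by rewrite opprB [RHS]addrC addrA subrK.
by rewrite {1}e ipBl hp // hq // subrr.
Qed.

Lemma proj_op (K : set H) : csubspace K -> hclosed K ->
  exists P, bounded_op ip P /\ forall x, K (P x) /\ forall y, K y -> ip (x - P x) y = 0.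
Proof.
move=> hK cK.
have hex : forall x, exists p, K p /\ forall y, K y -> ip (x - p) y = 0.
  move=> x; have [p [Kp hp]] := projection_thm x (csub_rsub hK) cK.
  exists p; split => // y Ky.
  have Kiy : K ('i%C *: y) by case: hK => K0 hK; rewrite -[_ *: y]addr0; apply: hK.
  by rewrite ip_decomp hp // hp.
have [P hP] := choice hex.
have lin : linop P.
  move=> a x y; have [Kx hx] := hP x; have [Ky hy] := hP y.
  have [Kxy hxy] := hP (a *: x + y).
  apply: (proj_unique hK Kxy _ hxy); first by case: hK => _; apply.
  move=> z Kz; have -> : a *: x + y - (a *: P x + P y) = a *: (x - P x) + (y - P y).
    by rewrite scalerBr opprD !addrA; congr (_ - _); rewrite -!addrA; congr (_ + _); rewrite addrC.
  by rewrite ipL hx // hy // mulr0 addr0.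
exists P; split => //; split => //; exists 1 => x; rewrite mul1r.
have [Kx hx] := hP x.
case: (eqVneq (hn (P x)) 0) => [->|hne]; first exact: hn_ge0.
have hpos : 0 < hn (P x) by rewrite lt_def hne hn_ge0.
have : hn (P x) ^+ 2 <= hn x * hn (P x).
  rewrite hn_sq; have : re (x - P x) (P x) = 0 by rewrite /re hx.
  rewrite reBl => /eqP; rewrite subr_eq0 => /eqP <-; exact: CS'.
by rewrite expr2 ler_pM2r.
Qed.

Lemma hclosure_csub E : csubspace E -> csubspace (hclosure ip E).
Proof.
case=> E0 hE; split; first exact: sub_hclosure.
move=> a x y hx hy e e0.
have ea : 0 < e / 2 / (cabs a + 1) by rewrite !divr_gt0 // ltr_wpDl // sqrtr_ge0.
have e2 : 0 < e / 2 by rewrite divr_gt0.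
have [x' Ex' hx'] := hx _ ea; have [y' Ey' hy'] := hy _ e2.
exists (a *: x' + y'); first exact: hE.
have -> : a *: x + y - (a *: x' + y') = a *: (x - x') + (y - y').
  by rewrite scalerBr opprD !addrA; congr (_ - _); rewrite -!addrA; congr (_ + _); rewrite addrC.
apply: le_lt_trans (hn_triangle _ _) _; rewrite hnZ.
have ca : 0 <= cabs a by exact: sqrtr_ge0.
have : cabs a * hn (x - x') <= e / 2.
  have : cabs a * hn (x - x') <= (cabs a + 1) * (e / 2 / (cabs a + 1)).
    apply: ler_pM; rewrite ?hn_ge0 //; [lra | exact: ltW].
  have -> : (cabs a + 1) * (e / 2 / (cabs a + 1)) = e / 2.
    by field; apply/lt0r_neq0; lra.
  done.
lra.
Qed.

Lemma range_csub S : linop S -> csubspace (range S).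
Proof.
move=> hS; split; first by exists 0; rewrite ?(lin0 hS).
by move=> a x y [u _ <-] [v _ <-]; exists (a *: u + v) => //; rewrite hS.
Qed.

Lemma projR_spec (A : H -> H) : linop A ->
  bounded_op ip (projR ip A) /\ forall x, hclosure ip (range A) (projR ip A x) /\
    forall y, hclosure ip (range A) y -> ip (x - projR ip A x) y = 0.
Proof.
move=> hA; have [P hP] := proj_op (hclosure_csub (range_csub hA)) (@hclosure_closed _).
exact: (ClassicalEpsilon.epsilon_spec (inhabits A) (fun Q => bounded_op ip Q /\ forall x,
  hclosure ip (range A) (Q x) /\ forall y, hclosure ip (range A) y -> ip (x - Q x) y = 0)
  (ex_intro _ P hP)).
Qed.

Lemma riesz_re (g : H -> R) : (forall x y, g (x + y) = g x + g y) ->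
  (forall (r : R) x, g ((r%:C)%C *: x) = r * g x) ->
  (exists M, forall x, `|g x| <= M * hn x) -> exists z, forall x, g x = re x z.
Proof.
move=> gD gZ [M hM].
have g0 : g 0 = 0 by have := gZ 0 0; rewrite mul0r scaler0.
have gN : forall x, g (- x) = - g x.
  move=> x; have := gZ (-1) x; rewrite mulN1r => <-; congr g.
  by rewrite rmorphN rmorph1 scaleN1r.
have gB : forall x y, g (x - y) = g x - g y by move=> x y; rewrite gD gN.
pose K : set H := fun x => g x = 0.
have rK : rsubspace K.
  split; [exact: g0 | by move=> x y; rewrite /K gD => -> -> ; rewrite addr0 |].
  by move=> r x; rewrite /K gZ => ->; rewrite mulr0.
have cK : hclosed K.
  move=> x hx; rewrite /K; apply/eqP; rewrite -normr_le0.
  apply: (@le_of_epsC _ _ `|M|) => // e e0 _.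
  have [y Ky hy] := hx e e0.
  have : g x = g (x - y) by rewrite gB Ky subr0.
  move=> ->; apply: le_trans (hM _) _; rewrite add0r.
  apply: (@le_trans _ _ (`|M| * hn (x - y))).
    by apply: ler_wpM2r; [exact: hn_ge0 | exact: ler_norm].
  by apply: ler_wpM2l; [exact: normr_ge0 | exact: ltW].
case: (pselect (forall u, g u = 0)) => [g00|].
  by exists 0 => x; rewrite g00 re0r.
move=> /existsNP [u gu].
have [p [Kp hp]] := projection_thm u rK cK.
pose w := u - p.
have gw : g w = g u by rewrite /w gB Kp subr0.
have gwn : g w != 0 by rewrite gw; apply/eqP.
have rw : re w w != 0.
  apply/eqP => /re_eq0 w0; move: gwn; by rewrite w0 g0 eqxx.
exists (((g w / re w w)%:C)%C *: w) => x.
rewrite reZr.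
have Kv : K (x - ((g x / g w)%:C)%C *: w) by rewrite /K gB gZ divfK // subrr.
have := hp _ Kv; rewrite -/w reC reBl reZl => /eqP; rewrite subr_eq0 => /eqP ->.
by field; apply/andP.
Qed.

Lemma adj_exists S : bounded_op ip S ->
  exists S', bounded_op ip S' /\ forall x y, ip (S x) y = ip x (S' y).
Proof.
move=> /bounded_pos [lS [M [M0 hM]]].
have hz : forall y, exists z, forall x, re (S x) y = re x z.
  move=> y; apply: riesz_re.
  - by move=> a b; rewrite (linD lS) reDl.
  - by move=> r a; rewrite (linZ lS) reZl.
  - exists (M * hn y) => x; apply: le_trans (CS _ _) _.
    rewrite mulrAC; apply: ler_wpM2r; [exact: hn_ge0 | exact: hM].
have [Z hZ] := choice hz.
have hip : forall x y, ip (S x) y = ip x (Z y).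
  move=> x y; rewrite ip_decomp [ip x _]ip_decomp hZ re_iswap -(linZ lS) hZ.
  by rewrite -re_iswap.
exists Z; split => //; split.
  move=> a y y'; apply: ip_inj_r => x.
  by rewrite -hip ipDr ipZr ipDr ipZr -!hip.
exists M => y.
case: (eqVneq (hn (Z y)) 0) => [->|hne]; first by rewrite mulr_ge0 ?hn_ge0.
have hpos : 0 < hn (Z y) by rewrite lt_def hne hn_ge0.
have : hn (Z y) ^+ 2 <= M * hn y * hn (Z y).
  rewrite hn_sq -hZ; apply: le_trans (CS' _ _) _.
  rewrite mulrAC; apply: ler_wpM2r; [exact: hn_ge0 | exact: hM].
by rewrite expr2 ler_pM2r.
Qed.

Lemma adj_spec S : bounded_op ip S ->
  bounded_op ip (adj ip S) /\ forall x y, ip (S x) y = ip x (adj ip S y).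
Proof.
move=> hS; have [Z hZ] := adj_exists hS.
exact: (ClassicalEpsilon.epsilon_spec (inhabits S)
  (fun S' => bounded_op ip S' /\ forall x y, ip (S x) y = ip x (S' y)) (ex_intro _ Z hZ)).
Qed.

Lemma conv_le u l : (forall e : R, 0 < e -> exists N : nat, forall n, (N <= n)%N -> hn (u n - l) <= e) ->
  conv u l.
Proof.
move=> h e e0; have e2 : 0 < e / 2 by rewrite divr_gt0.
have [N hN] := h _ e2; exists N => n /hN; lra.
Qed.

Lemma conv_unique u l l' : conv u l -> conv u l' -> l = l'.
Proof.
move=> h1 h2; apply/eqP; rewrite -subr_eq0; apply/eqP; apply: hn_eq0.
apply/eqP; rewrite eq_le hn_ge0 andbT.
apply: le_of_eps => e e0; rewrite add0r.
have e2 : 0 < e / 2 by rewrite divr_gt0.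
have [N1 hN1] := h1 _ e2; have [N2 hN2] := h2 _ e2.
have ha := hN1 (maxn N1 N2) (leq_maxl _ _); have hb := hN2 (maxn N1 N2) (leq_maxr _ _).
rewrite hnBC in ha; have := hn_triangleB l (u (maxn N1 N2)) l'; lra.
Qed.

Lemma conv_lin (a : R[i]) u v l l' : conv u l -> conv v l' ->
  conv (fun n => a *: u n + v n) (a *: l + l').
Proof.
move=> hu hv; apply: conv_le => e e0.
have ea : 0 < e / 2 / (cabs a + 1) by rewrite !divr_gt0 // ltr_wpDl // sqrtr_ge0.
have e2 : 0 < e / 2 by rewrite divr_gt0.
have [N1 hN1] := hu _ ea; have [N2 hN2] := hv _ e2.
exists (maxn N1 N2) => n hn'.
have h1 := hN1 n (leq_trans (leq_maxl _ _) hn'); have h2 := hN2 n (leq_trans (leq_maxr _ _) hn').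
have -> : a *: u n + v n - (a *: l + l') = a *: (u n - l) + (v n - l').
  by rewrite scalerBr opprD !addrA; congr (_ - _); rewrite -!addrA; congr (_ + _); rewrite addrC.
apply: le_trans (hn_triangle _ _) _; rewrite hnZ.
have ca : 0 <= cabs a by exact: sqrtr_ge0.
have : cabs a * hn (u n - l) <= e / 2.
  have : cabs a * hn (u n - l) <= (cabs a + 1) * (e / 2 / (cabs a + 1)).
    apply: ler_pM; rewrite ?hn_ge0 //; [lra | exact: ltW].
  have -> : (cabs a + 1) * (e / 2 / (cabs a + 1)) = e / 2.
    by field; apply/lt0r_neq0; lra.
  done.
lra.
Qed.

Lemma conv_shift u l : conv u l -> conv (fun n => u n.+1) l.
Proof. by move=> h e e0; have [N hN] := h e e0; exists N => n hn'; apply: hN; exact: leqW. Qed.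

Lemma conv_ext u v l : (forall n, u n = v n) -> conv u l -> conv v l.
Proof. by move=> huv h e e0; have [N hN] := h e e0; exists N => n /hN; rewrite huv. Qed.

Lemma conv_const l : conv (fun _ => l) l.
Proof. by move=> e e0; exists 0%N => n _; rewrite subrr hn0. Qed.

Lemma conv_add u v l l' : conv u l -> conv v l' -> conv (fun n => u n + v n) (l + l').
Proof.
move=> hu hv; have := conv_lin 1 hu hv; rewrite scale1r.
by apply: conv_ext => n; rewrite scale1r.
Qed.

Lemma conv_scale (a : R[i]) u l : conv u l -> conv (fun n => a *: u n) (a *: l).
Proof.
move=> h; have := conv_lin a h (conv_const 0); rewrite addr0.
by apply: conv_ext => n; rewrite addr0.
Qed.

Lemma conv_norm_le u l (c : R) : conv u l -> (forall n, hn (u n) <= c) -> hn l <= c.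
Proof.
move=> h hc; apply: le_of_eps => e e0; have [N hN] := h e e0.
have := hN N (leqnn _); have := hc N; have := hn_triangleB l (u N) 0.
by rewrite !subr0 hnBC; lra.
Qed.

Lemma conv_op S u l : bounded_op ip S -> conv u l -> conv (fun n => S (u n)) (S l).
Proof.
move=> /bounded_pos [lS [M [M0 hM]]] h; apply: conv_le => e e0.
have eM : 0 < e / (M + 1) by rewrite divr_gt0 //; lra.
have [N hN] := h _ eM; exists N => n /hN hn'.
rewrite -(linB lS); apply: le_trans (hM _) _.
apply: (@le_trans _ _ ((M + 1) * (e / (M + 1)))); last by rewrite mulrC divfK //; apply/lt0r_neq0; lra.
apply: ler_pM; rewrite ?hn_ge0 //; [lra | exact: ltW].
Qed.

Lemma conv_re u v l l' y z : conv u l -> conv v l' ->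
  (forall n, re (u n) y = re z (v n)) -> re l y = re z l'.
Proof.
move=> hu hv h; apply/eqP; rewrite -subr_eq0 -normr_le0.
apply: (@le_of_epsC _ _ (hn y + hn z)); first by rewrite addr_ge0 ?hn_ge0.
move=> e e0 _; have [N1 hN1] := hu e e0; have [N2 hN2] := hv e e0.
pose n := maxn N1 N2.
have h1 := hN1 n (leq_maxl _ _); have h2 := hN2 n (leq_maxr _ _).
have -> : re l y - re z l' = re (l - u n) y + re z (v n - l').
  by rewrite reBl reBr h; ring.
apply: le_trans (ler_normD _ _) _.
have := CS (l - u n) y; have := CS z (v n - l'); rewrite hnBC in h1.
have := hn_ge0 y; have := hn_ge0 z; have := hn_ge0 (u n - l); have := hn_ge0 (v n - l').
nra.
Qed.

Lemma pos_Im (A : H -> H) : positive_op ip A -> forall u, complex.Im (ip (A u) u) = 0.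
Proof. by case=> _ h u; have := h u; rewrite lecE => /andP[/eqP ->]. Qed.
Lemma pos_re (A : H -> H) : positive_op ip A -> forall u, 0 <= re (A u) u.
Proof. by case=> _ h u; have := h u; rewrite lecE => /andP[]. Qed.

Lemma pos_selfadj (A : H -> H) : positive_op ip A -> forall x y, ip (A x) y = ip x (A y).
Proof.
move=> hA x y; have lA : linop A by case: hA => [[]].
have h1 := pos_Im hA (x + y); have h2 := pos_Im hA (x + 'i%C *: y).
have hx := pos_Im hA x; have hy := pos_Im hA y.
rewrite (linD lA) !ipDl !ipDr !ImD hx in h1.
rewrite (linD lA) !ipDl !ipDr !ImD hx (pos_Im hA ('i%C *: y)) in h2.
rewrite ipZr [A ('i%C *: y)](linZ lA) ipZl !ImM /= in h2.
rewrite hy in h1.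
rewrite [ip x (A y)]ipC; move: h1 h2.
case: (ip (A x) y) => a b; case: (ip (A y) x) => c d /= h1 h2.
apply/eqP; rewrite eq_complex /=; apply/andP; split; apply/eqP; lra.
Qed.

Lemma pos_selfadj_re (A : H -> H) : positive_op ip A -> forall x y, re (A x) y = re x (A y).
Proof. by move=> hA x y; rewrite /re pos_selfadj. Qed.

Lemma pos_CS (A : H -> H) : positive_op ip A -> forall u v,
  re (A u) v ^+ 2 <= re (A u) u * re (A v) v.
Proof.
move=> hA u v; have lA : linop A by case: hA => [[]].
apply: quad_le; first exact: pos_re.
move=> t; have := pos_re hA (u + (t%:C)%C *: v).
rewrite (linD lA) (linZ lA) !reDl !reDr !reZl !reZr.
rewrite [re (A v) u]pos_selfadj_re // [re v (A u)]reC; nra.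
Qed.

Lemma pos_bound (A : H -> H) M : positive_op ip A -> 0 <= M ->
  (forall x, hn (A x) <= M * hn x) -> forall x, hn (A x) ^+ 2 <= M * re (A x) x.
Proof.
move=> hA M0 hM x.
have q0 := pos_re hA x.
case: (eqVneq (hn (A x)) 0) => [->|hne]; first by rewrite expr0n mulr_ge0.
have hpos : 0 < hn (A x) by rewrite lt_def hne hn_ge0.
have h1 : hn (A x) ^+ 2 = re (A x) (A x) by rewrite hn_sq.
have h2 := pos_CS hA x (A x).
have h3 : re (A (A x)) (A x) <= M * hn (A x) ^+ 2.
  apply: le_trans (CS' _ _) _; rewrite expr2 mulrA; apply: ler_wpM2r; first exact: hn_ge0.
  exact: hM.
have h4 : hn (A x) ^+ 2 * hn (A x) ^+ 2 <= re (A x) x * (M * hn (A x) ^+ 2).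
  rewrite -expr2.
  rewrite {1}h1; apply: le_trans h2 _; apply: ler_wpM2l => //.
have h5 : hn (A x) ^+ 2 * hn (A x) ^+ 2 <= (M * re (A x) x) * hn (A x) ^+ 2.
  by move: h4; set z := hn (A x) ^+ 2; set q := re (A x) x; nra.
by move: h5; rewrite ler_pM2r // exprn_gt0.
Qed.

Fixpoint aseq (n : nat) : R := match n with 0 => 0 | n'.+1 => (1 + aseq n' ^+ 2) / 2 end.

Lemma aseq_bnd n : 0 <= aseq n <= 1.
Proof.
elim: n => [|n /andP[h0 h1]] /=; first by rewrite lexx ler01.
apply/andP; split; first by apply: divr_ge0; rewrite ?addr_ge0 ?sqr_ge0.
rewrite ler_pdivrMr //; nra.
Qed.

Lemma aseq_incr n : aseq n <= aseq n.+1.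
Proof. have /andP[h0 h1] := aseq_bnd n; rewrite /= ler_pdivlMr //; nra. Qed.

Lemma aseq_mono n m : (n <= m)%N -> aseq n <= aseq m.
Proof.
elim: m => [|m ih]; first by rewrite leqn0 => /eqP ->.
rewrite leq_eqVlt => /orP[/eqP ->|]; first exact: lexx.
by rewrite ltnS => /ih h; apply: le_trans h (aseq_incr m).
Qed.

Lemma aseq_cauchy e : 0 < e -> exists N, forall n m, (N <= n)%N -> (n <= m)%N -> aseq m - aseq n < e.
Proof.
move=> e0; pose E : set R := fun r => exists n, r = aseq n.
have Eb : forall y, E y -> y <= 1 by move=> y [n ->]; have /andP[] := aseq_bnd n.
have [y [N ->] hy] := sup_adh (ex_intro _ 0 (ex_intro _ 0%N erefl)) Eb e0.
exists N => n m hn' hm.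
have h1 : aseq m <= sup E by apply: (sup_ub Eb); exists m.
have h2 := aseq_mono hn'; lra.
Qed.

Section SqrtB.
Variable (B : H -> H).
Hypothesis lB : linop B.
Hypothesis sB : forall x y, ip (B x) y = ip x (B y).
Hypothesis nB : forall x, hn (B x) <= hn x.

Fixpoint Xn (n : nat) (x : H) : H :=
  match n with 0 => 0 | n'.+1 => ((2^-1 : R)%:C)%C *: (B x + Xn n' (Xn n' x)) end.

Lemma Xn_lin n : linop (Xn n).
Proof.
elim: n => [|n ih] a x y /=; first by rewrite scaler0 addr0.
rewrite lB ih ih addrACA -[a *: B x + _]scalerDr [LHS]scalerDr !scalerA [a * _]mulrC.
done.
Qed.

Lemma Xn_sa n x y : ip (Xn n x) y = ip x (Xn n y).
Proof.
elim: n x y => [|n ih] x y /=; first by rewrite ip0l ip0r.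
by rewrite ipZl ipZr conjc_real ipDl ipDr sB ih ih.
Qed.

Lemma Xn_norm n x : hn (Xn n x) <= aseq n * hn x.
Proof.
elim: n x => [|n ih] x /=; first by rewrite hn0 mul0r.
rewrite hnR ger0_norm ?invr_ge0 ?ler0n //.
have h1 := nB x; have h2 := ih (Xn n x); have h3 := ih x.
have h4 := hn_triangle (B x) (Xn n (Xn n x)).
have /andP[a0 a1] := aseq_bnd n.
have h5 : aseq n * hn (Xn n x) <= aseq n * (aseq n * hn x) by apply: ler_wpM2l.
have := hn_ge0 x; nra.
Qed.

Lemma Xn_diff n m x : (n <= m)%N -> hn (Xn m x - Xn n x) <= (aseq m - aseq n) * hn x.
Proof.
elim: n m x => [|n ih] m x hnm.
  by rewrite /= subr0 subr0; apply: Xn_norm.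
case: m hnm => [//|m] /= hnm.
rewrite -scalerBr hnR ger0_norm ?invr_ge0 ?ler0n //.
have -> : B x + Xn m (Xn m x) - (B x + Xn n (Xn n x)) =
   Xn m (Xn m x - Xn n x) + (Xn m (Xn n x) - Xn n (Xn n x)).
  rewrite (linB (Xn_lin m)) opprD addrA [B x + _]addrC addrK.
  by rewrite addrA subrK.
have h1 := hn_triangle (Xn m (Xn m x - Xn n x)) (Xn m (Xn n x) - Xn n (Xn n x)).
have h2 := Xn_norm m (Xn m x - Xn n x).
have h3 := ih m x hnm. have h4 := ih m (Xn n x) hnm.
have h5 := Xn_norm n x.
have /andP[am0 am1] := aseq_bnd m; have /andP[an0 an1] := aseq_bnd n.
have hmn : aseq n <= aseq m := @aseq_mono n m hnm.
have h6 : aseq m * hn (Xn m x - Xn n x) <= aseq m * ((aseq m - aseq n) * hn x) by apply: ler_wpM2l.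
have h7 : (aseq m - aseq n) * hn (Xn n x) <= (aseq m - aseq n) * (aseq n * hn x).
  apply: ler_wpM2l => //; by rewrite subr_ge0.
have := hn_ge0 x; nra.
Qed.

Lemma Xn_cauchy x : cauchy (fun n => Xn n x).
Proof.
move=> e e0; have ex : 0 < e / (hn x + 1) by rewrite divr_gt0 // ltr_wpDl ?hn_ge0.
have [N hN] := aseq_cauchy ex; exists N => m n hm hn'.
have key : forall p q, (N <= p)%N -> (p <= q)%N -> hn (Xn q x - Xn p x) < e.
  move=> p q hp hpq; apply: le_lt_trans (Xn_diff x hpq) _.
  have := hN p q hp hpq; have := aseq_mono hpq; have := hn_ge0 x.
  move=> hx0 hmono hlt.
  apply: (@le_lt_trans _ _ (e / (hn x + 1) * hn x)).
    by apply: ler_wpM2r => //; exact: ltW.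
  rewrite mulrAC ltr_pdivrMr ?ltr_wpDl ?hn_ge0 //; nra.
case: (leqP n m) => h.
  by apply: key.
by rewrite hnBC; apply: key => //; exact: ltnW.
Qed.

Lemma sqrtB_exists : exists X, [/\ linop X, (forall x y, ip (X x) y = ip x (X y)),
  (forall x, hn (X x) <= hn x) &
  (forall x, X x = ((2^-1 : R)%:C)%C *: (B x + X (X x)))].
Proof.
have [X hX] := choice (fun x => complete (Xn_cauchy x)).
have lX : linop X.
  move=> a x y; apply: conv_unique (hX (a *: x + y)) _.
  apply: (conv_ext (u := fun n => a *: Xn n x + Xn n y)).
    by move=> n; rewrite Xn_lin.
  exact: conv_lin (hX x) (hX y).
have nX : forall x, hn (X x) <= hn x.
  move=> x; apply: (conv_norm_le (hX x)) => n.
  apply: le_trans (Xn_norm n x) _; have /andP[_ a1] := aseq_bnd n.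
  by rewrite ler_piMl ?hn_ge0.
have bX : bounded_op ip X by split => //; exists 1 => x; rewrite mul1r.
exists X; split => //.
- move=> x y; rewrite ip_decomp [ip x _]ip_decomp.
  have -> : re (X x) y = re x (X y).
    by apply: (conv_re (hX x) (hX y)) => n; rewrite /re Xn_sa.
  have -> : re (X x) ('i%C *: y) = re x ('i%C *: X y).
    apply: (conv_re (hX x) (u := fun n => Xn n x) (v := fun n => 'i%C *: Xn n y)).
      exact: conv_scale (hX y).
    by move=> n; rewrite /re Xn_sa (linZ (Xn_lin n)).
  done.
move=> x; apply: conv_unique (conv_shift (hX x)) _ => /=.
apply: conv_scale; apply: conv_add; first exact: conv_const.
apply: conv_le => e e0; have e2 : 0 < e / 2 by rewrite divr_gt0.
have [N1 hN1] := hX x _ e2; have [N2 hN2] := hX (X x) _ e2.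
exists (maxn N1 N2) => n hn'.
have h1 := hN1 n (leq_trans (leq_maxl _ _) hn'); have h2 := hN2 n (leq_trans (leq_maxr _ _) hn').
have -> : Xn n (Xn n x) - X (X x) = Xn n (Xn n x - X x) + (Xn n (X x) - X (X x)).
  by rewrite (linB (Xn_lin n)) addrA subrK.
apply: le_trans (hn_triangle _ _) _.
have h3 := Xn_norm n (Xn n x - X x); have /andP[a0 a1] := aseq_bnd n.
have h4 : aseq n * hn (Xn n x - X x) <= hn (Xn n x - X x) by rewrite ler_piMl ?hn_ge0.
lra.
Qed.
End SqrtB.

Lemma ip_ext u v : (forall z, ip u z = ip v z) -> u = v.
Proof. by move=> h; apply: ip_inj_r => z; rewrite ipC h -ipC. Qed.

Lemma linop_comb S T (c : R[i]) : linop S -> linop T -> linop (fun x => S x - c *: T x).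
Proof.
move=> hS hT a x y; rewrite hS hT scalerDr !scalerA mulrC -scalerA.
rewrite opprD addrACA -scalerBr; done.
Qed.

Lemma linop_id : linop (fun x : H => x).
Proof. by []. Qed.

Lemma linop_scale S (c : R[i]) : linop S -> linop (fun x => c *: S x).
Proof. by move=> hS a x y; rewrite hS scalerDr !scalerA mulrC. Qed.

Lemma sqrt_exists A : positive_op ip A -> exists S, positive_op ip S /\ forall x, S (S x) = A x.
Proof.
move=> hA; have [lA [M [M0 hM]]] := bounded_pos hA.1.
pose m := M + 1; have m0 : 0 < m by rewrite /m; lra.
pose c : R[i] := ((m^-1)%:C)%C.
pose B x := x - c *: A x.
have lB : linop B := linop_comb c linop_id lA.
have sB : forall x y, ip (B x) y = ip x (B y).
  move=> x y; rewrite /B ipBl ipBr ipZl ipZr conjc_real pos_selfadj //.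
have nB : forall x, hn (B x) <= hn x.
  move=> x; apply: sq_le; rewrite ?hn_ge0 //.
  have -> : B x = x + (((- m^-1) : R)%:C)%C *: A x by rewrite /B rmorphN scaleNr.
  rewrite hn_sq re_sqD -hn_sq -[re (A x) (A x)]hn_sq [re x (A x)]reC.
  have hq := pos_re hA x; have hb := pos_bound hA M0 hM x.
  set q := re (A x) x in hq hb *; set u := m^-1.
  have u0 : 0 < u by rewrite invr_gt0.
  have um : u * m = 1 by rewrite mulVf // lt0r_neq0.
  have uM : u * M <= 1 by move: um; rewrite /m; nra.
  have : u ^+ 2 * hn (A x) ^+ 2 <= u ^+ 2 * (M * q) by apply: ler_wpM2l; rewrite ?sqr_ge0.
  have h2 : u ^+ 2 * (M * q) <= u * q.
    have -> : u ^+ 2 * (M * q) = (u * M) * (u * q) by ring.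
    by rewrite ler_piMl // mulr_ge0 // ltW.
  have h3 : 0 <= u * q by rewrite mulr_ge0 // ltW.
  move=> h1; rewrite sqrrN; nra.
have [X [lX sX nX fX]] := sqrtB_exists lB sB nB.
pose sq : R[i] := ((Num.sqrt m)%:C)%C.
pose S x := sq *: x - sq *: X x.
have lS : linop S := linop_comb sq (linop_scale sq linop_id) lX.
exists S; split.
  split.
    split => //; exists (Num.sqrt m + Num.sqrt m) => x.
    rewrite /S; apply: le_trans (hn_triangle _ _) _; rewrite hnN !hnZ /sq cabsR.
    rewrite ger0_norm ?sqrtr_ge0 // mulrDl lerD2l; apply: ler_wpM2l => //.
    exact: sqrtr_ge0.
  move=> x; rewrite /S ipBl !ipZl lecE /= ImD ImN !ImM ReD ReN !ReM /= !mul0r !subr0 !addr0.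
  have hIm : complex.Im (ip (X x) x) = 0.
    have := sX x x; rewrite [ip x (X x)]ipC.
    by case: (ip (X x) x) => a b [] /=; lra.
  rewrite Im_ipxx hIm !mulr0 subrr eqxx /=.
  rewrite -mulrBr mulr_ge0 ?sqrtr_ge0 // subr_ge0 -/(re x x) -/(re (X x) x).
  apply: le_trans (CS' _ _) _; rewrite -hn_sq expr2; apply: ler_wpM2r; [exact: hn_ge0 | exact: nX].
move=> x; apply: ip_ext => z.
have hZ : X (X x) = ((2 : R)%:C)%C *: X x - B x.
  have hf := fX x; rewrite [in RHS]hf scalerA -rmorphM mulfV ?pnatr_eq0 // rmorph1 scale1r.
  by rewrite addrC addKr.
rewrite /S (linB lX) !(linZ lX) hZ.
rewrite !ipBl !ipZl !ipBl !ipZl /B !ipBl !ipZl.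
have hs : sq * sq * c = 1.
  by rewrite /sq /c -!rmorphM -expr2 sqr_sqrtr ?ltW // mulfV ?lt0r_neq0 // rmorph1.
set a := ip x z; set b := ip (X x) z; set d := ip (A x) z.
transitivity (sq * sq * c * d); first ring.
by rewrite hs mul1r.
Qed.

Lemma sqrt_spec A : positive_op ip A ->
  positive_op ip (sqrt_op ip A) /\ forall x, sqrt_op ip A (sqrt_op ip A x) = A x.
Proof.
move=> hA; have [S hS] := sqrt_exists hA.
exact: (ClassicalEpsilon.epsilon_spec (inhabits A)
  (fun S => positive_op ip S /\ forall x, S (S x) = A x) (ex_intro _ S hS)).
Qed.

Lemma pow_half_small (n : nat) : (2 ^+ n : R)^-1 <= (n.+1%:R)^-1.
Proof.
rewrite lef_pV2 ?posrE ?exprn_gt0 ?ltr0Sn //.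
elim: n => [|n ih]; first by rewrite expr0.
have h1 : 1 <= (2 : R) ^+ n by rewrite exprn_ege1 // ler1n.
rewrite exprS -natr1; lra.
Qed.

Lemma baire (F : nat -> set H) : (forall k, hclosed (F k)) -> (forall x, exists k, F k x) ->
  exists k x0 (r : R), 0 < r /\ forall y, hn (y - x0) < r -> F k y.
Proof.
move=> cF cov; apply/not_existsP => hno.
have hstep : forall k (p : H * R), exists q : H * R,
  0 < p.2 -> [/\ 0 < q.2, q.2 <= p.2 / 2, hn (q.1 - p.1) + q.2 < p.2 &
     forall z, hn (z - q.1) <= q.2 -> ~ F k z].
  move=> k [x r]; case: (lerP r 0) => /= hr; first by exists (x, r) => h; exfalso; lra.
  have r2 : 0 < r / 2 by rewrite divr_gt0.
  have [y [hy nFy]] : exists y, hn (y - x) < r / 2 /\ ~ F k y.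
    apply/not_existsP => hc; apply: (hno k); exists x, (r / 2); split => // y hy.
    by apply: contrapT => nF; exact: (hc y (conj hy nF)).
  have [rho [rho0 hrho]] : exists rho : R, 0 < rho /\ forall z, F k z -> rho <= hn (y - z).
    apply/not_existsP => hc; apply: nFy; apply: cF => e e0.
    apply: contrapT => hc2; apply: (hc e); split => // z Fz.
    by rewrite leNgt; apply/negP => hlt; apply: hc2; exists z.
  pose r' := Num.min (rho / 2) (r / 4).
  have r'0 : 0 < r' by rewrite lt_min !divr_gt0.
  have r'1 : r' <= rho / 2 by rewrite ge_min lexx.
  have r'2 : r' <= r / 4 by rewrite ge_min lexx orbT.
  exists (y, r') => _ /=; split => //; first lra; first lra.
  move=> z hz Fz; have := hrho z Fz; rewrite hnBC; lra.
have [step0 hs0] := choice (fun kp : nat * (H * R) => hstep kp.1 kp.2).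
pose step k p := step0 (k, p).
have hs : forall k (p : H * R), 0 < p.2 ->
  [/\ 0 < (step k p).2, (step k p).2 <= p.2 / 2, hn ((step k p).1 - p.1) + (step k p).2 < p.2 &
     forall z, hn (z - (step k p).1) <= (step k p).2 -> ~ F k z] := fun k p => hs0 (k, p).
pose fix sq (n : nat) : H * R := match n with 0 => (0, 1) | n'.+1 => step n' (sq n') end.
have hpos : forall n, 0 < (sq n).2.
  by elim => [|n ih] /=; [exact: ltr01 | have [] := hs n (sq n) ih].
have hrad : forall n, (sq n).2 <= (2 ^+ n : R)^-1.
  elim => [|n ih] /=; first by rewrite expr0 invr1.
  have [_ h _ _] := hs n (sq n) (hpos n).
  apply: le_trans h _; rewrite exprS invfM [X in _ <= X]mulrC ler_pM2r // invr_gt0 //.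
have hnest : forall n m, (n <= m)%N -> hn ((sq m).1 - (sq n).1) + (sq m).2 <= (sq n).2.
  move=> n m /subnK <-; elim: (m - n)%N => [|j ih]; first by rewrite add0n subrr hn0 add0r.
  rewrite addSn /=; have [_ _ h _] := hs (j + n)%N (sq (j + n)%N) (hpos (j + n)%N).
  have := hn_triangleB (step (j + n) (sq (j + n))).1 (sq (j + n)).1 (sq n).1; lra.
have hcauchy : cauchy (fun n => (sq n).1).
  move=> e e0; have [N hN] := archi_inv e0; exists N => m n hm hn'.
  have key : forall p q, (N <= p)%N -> (p <= q)%N -> hn ((sq q).1 - (sq p).1) < e.
    move=> p q hp hpq; have := hnest _ _ hpq; have := hpos q.
    have := hrad p; have := pow_half_small p; have := hN p hp.
    move=> h1 h2 h3 h4 h5; have h6 := le_trans h3 h2; move: h1 h4 h5 h6.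
    set a := (p.+1%:R)^-1; set b := hn _; set c := (sq q).2; set d := (sq p).2; lra.
  case: (leqP m n) => h; first by rewrite hnBC; apply: key.
  by apply: key => //; exact: ltnW.
have [xs hxs] := complete hcauchy.
have [k Fk] := cov xs.
have [_ _ _ hout] := hs k (sq k) (hpos k).
apply: (hout xs) => //.
apply: (@conv_norm_le (fun n => (sq (n + k.+1)%N).1 - (sq k.+1).1) (xs - (sq k.+1).1)).
  move=> e e0; have [N hN] := hxs e e0; exists N => n hn'.
  rewrite opprB addrA subrK; apply: hN; exact: leq_trans hn' (leq_addr _ _).
move=> n; have := hnest k.+1 (n + k.+1)%N (leq_addl _ _); have := hpos (n + k.+1)%N.
rewrite /=; lra.
Qed.

Lemma weak_bounded (V : set H) : (forall x, exists k : R, forall v, V v -> `|re x v| <= k) ->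
  exists C, forall v, V v -> hn v <= C.
Proof.
move=> hV.
pose F (k : nat) : set H := fun x => forall v, V v -> `|re x v| <= k%:R.
have cF : forall k, hclosed (F k).
  move=> k x hx v Vv; apply: (@le_of_epsC _ _ (hn v)); first exact: hn_ge0.
  move=> e e0 _; have [y Fy hy] := hx e e0.
  have -> : re x v = re y v + re (x - y) v by rewrite reBl addrC subrK.
  apply: le_trans (ler_normD _ _) _; apply: lerD; first exact: Fy.
  apply: le_trans (CS _ _) _; rewrite mulrC; apply: ler_wpM2l; [exact: hn_ge0 | exact: ltW].
have cov : forall x, exists k, F k x.
  move=> x; have [k hk] := hV x; exists (Num.Def.archi_bound `|k|) => v Vv.
  apply: le_trans (hk v Vv) _; apply: le_trans (ler_norm k) _.
  exact: ltW (archi_boundP (normr_ge0 k)).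
have [k [x0 [r [r0 hr]]]] := baire cF cov.
exists (4 * k%:R / r) => v Vv.
have Fx0 : F k x0 by apply: hr; rewrite subrr hn0.
case: (eqVneq (hn v) 0) => [->|hne]; first by rewrite !mulr_ge0 ?ler0n ?invr_ge0 ?ltW.
have hpos : 0 < hn v by rewrite lt_def hne hn_ge0.
pose t := r / (2 * hn v).
have t0 : 0 < t by rewrite divr_gt0 // mulr_gt0.
have e1 : t * hn v = r / 2 by rewrite /t; field.
have hy : hn ((x0 + (t%:C)%C *: v) - x0) < r.
  rewrite addrC addKr hnR gtr0_norm // e1; lra.
have h1 := hr _ hy v Vv; have h2 := Fx0 v Vv.
rewrite reDl reZl -hn_sq in h1.
have h3 : t * hn v ^+ 2 <= 2 * k%:R.
  by move: h1 h2; rewrite !ler_norml => /andP[a1 a2] /andP[b1 b2]; lra.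
have e2 : t * hn v ^+ 2 = r / 2 * hn v by rewrite /t; field.
rewrite e2 in h3; rewrite ler_pdivlMr //; lra.
Qed.

Lemma orth_closure (E : set H) u : csubspace E -> (forall e, E e -> ip u e = 0) ->
  forall y, hclosure ip E y -> ip u y = 0.
Proof.
move=> hE hu.
have hre : forall y, hclosure ip E y -> re u y = 0.
  move=> y hy; apply/eqP; rewrite -normr_le0.
  apply: (@le_of_epsC _ _ (hn u)); first exact: hn_ge0.
  move=> e e0 _; have [z Ez hz] := hy e e0.
  have hz0 : re u z = 0 by rewrite /re hu.
  have -> : re u y = re u (y - z) by rewrite reBr hz0 subr0.
  rewrite add0r; apply: le_trans (CS _ _) _; apply: ler_wpM2l; [exact: hn_ge0 | exact: ltW].
move=> y hy; rewrite ip_decomp !hre //.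
by case: (hclosure_csub hE) => _ h; rewrite -[_ *: y]addr0; apply: h => //; apply: sub_hclosure; case: hE.
Qed.

Section Main.
Variables (A T : H -> H).
Hypothesis hA : positive_op ip A.
Hypothesis hA0 : exists x : H, A x <> 0.
Hypothesis hT : in_BAhalf ip A T.

Local Notation S := (sqrt_op ip A).
Local Notation P := (projR ip A).
Local Notation KA := (hclosure ip (range A)).
Local Notation KS := (hclosure ip (range S)).
Local Notation Ts := (adj ip T).

Let lA : linop A := hA.1.1.
Let pS : positive_op ip S := (sqrt_spec hA).1.
Let SS : forall x, S (S x) = A x := (sqrt_spec hA).2.
Let lS : linop S := pS.1.1.
Let sS : forall x y, ip (S x) y = ip x (S y) := pos_selfadj pS.
Let sA : forall x y, ip (A x) y = ip x (A y) := pos_selfadj hA.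
Let hP := projR_spec lA.
Let bP : bounded_op ip P := hP.1.
Let lP : linop P := bP.1.
Let PK : forall x, KA (P x) := fun x => ((hP.2 x).1).
Let Porth : forall x y, KA y -> ip (x - P x) y = 0 := fun x => ((hP.2 x).2).
Let cKA : csubspace KA := hclosure_csub (range_csub lA).
Let bT : bounded_op ip T := hT.1.
Let lT : linop T := bT.1.
Let hTs := adj_spec bT.
Let lTs : linop Ts := hTs.1.1.
Let adjT : forall x y, ip (T x) y = ip x (Ts y) := hTs.2.

Lemma KA_sub a x y : KA x -> KA y -> KA (a *: x + y).
Proof. by case: cKA => _; apply. Qed.
Lemma KA0 : KA 0.
Proof. by case: cKA. Qed.
Lemma KA_sub' x y : KA x -> KA y -> KA (x - y).
Proof. by move=> hx hy; rewrite -scaleN1r addrC; apply: KA_sub. Qed.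

Lemma rangeS_KA z : KA (S z).
Proof.
pose n := S z - P (S z).
have hn0 : forall y, ip (A y) n = 0.
  by move=> y; rewrite ipC Porth ?conjc0 //; apply: sub_hclosure; exists y.
have An0 : A n = 0.
  by apply: ip_inj_r => y; rewrite -sA hn0 ip0r.
have Sn0 : S n = 0.
  by apply: re_eq0; rewrite /re sS SS An0 ip0r.
have n0 : n = 0.
  apply: ipdef; rewrite {1}/n ipBl sS Sn0 ip0r sub0r [ip (P _) n]ipC Porth ?conjc0 ?oppr0 //.
have -> : S z = P (S z) by apply/eqP; rewrite -subr_eq0; apply/eqP.
exact: PK.
Qed.

Lemma KA_KS y : KA y <-> KS y.
Proof.
split => hy.
  by apply: hclosure_mono hy => _ [x _ <-]; exists (S x) => //; rewrite SS.
apply: (hclosure_min (@hclosure_closed _)) hy => _ [x _ <-]; exact: rangeS_KA.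
Qed.

Lemma SP x : S (P x) = S x.
Proof.
apply/eqP; rewrite eq_sym -subr_eq0 -(linB lS); apply/eqP.
apply: ip_ext => z; rewrite sS Porth ?ip0l //; exact: rangeS_KA.
Qed.

Lemma KA_ker u : KA u -> S u = 0 -> u = 0.
Proof.
move=> Ku Su; apply: ipdef.
apply: (orth_closure (range_csub lS)) => [_ [z _ <-]|]; last by apply/KA_KS.
by rewrite -sS Su ip0l.
Qed.

Lemma P_ker x : S x = 0 -> P x = 0.
Proof. by move=> h; apply: KA_ker; [exact: PK | rewrite SP]. Qed.

Lemma P_eq x y : S x = S y -> P x = P y.
Proof.
move=> h; apply/eqP; rewrite -subr_eq0 -(linB lP); apply/eqP; apply: P_ker.
by rewrite (linB lS) h subrr.
Qed.

Lemma P_id u : KA u -> P u = u.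
Proof.
move=> Ku; apply/eqP; rewrite eq_sym -subr_eq0; apply/eqP; apply: ipdef.
by apply: Porth; apply: KA_sub' => //; exact: PK.
Qed.

Lemma P_norm x : hn (P x) <= hn x.
Proof.
have [_ [M [M0 hM]]] := bounded_pos bP.
case: (eqVneq (hn (P x)) 0) => [->|hne]; first exact: hn_ge0.
have hpos : 0 < hn (P x) by rewrite lt_def hne hn_ge0.
have : hn (P x) ^+ 2 <= hn x * hn (P x).
  rewrite hn_sq; have : re (x - P x) (P x) = 0 by rewrite /re Porth ?PK.
  rewrite reBl => /eqP; rewrite subr_eq0 => /eqP <-; exact: CS'.
by rewrite expr2 ler_pM2r.
Qed.

Lemma ip_P_left u y : KA u -> ip u y = ip u (P y).
Proof.
move=> Ku; apply/eqP; rewrite -subr_eq0 -ipBr; apply/eqP.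
by rewrite ipC Porth // conjc0.
Qed.

Lemma approx u K : KA u -> 0 <= K -> (forall w, re u (S w) <= K * hn (S w)) -> hn u <= K.
Proof.
move=> Ku K0 h.
have Ku' : KS u by apply/KA_KS.
case: (eqVneq (hn u) 0) => [->|hne] //.
have hpos : 0 < hn u by rewrite lt_def hne hn_ge0.
suff : hn u ^+ 2 <= K * hn u by rewrite expr2 ler_pM2r.
apply: (@le_of_epsC _ _ (K + hn u)); first by rewrite addr_ge0 ?hn_ge0.
move=> e e0 _; have [_ [w _ <-] hw] := Ku' e e0.
have e1 : re u u = re u (S w) + re u (u - S w) by rewrite reBr addrC subrK.
have h1 := h w; have h2 := CS' u (u - S w).
have h3 := hn_triangle (S w) (u - S w); rewrite addrC subrK in h3.
have h4 : hn (S w) <= hn u + e.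
  have := hn_triangleB (S w) u 0; rewrite !subr0 hnBC; lra.
rewrite hn_sq e1.
have : K * hn (S w) <= K * (hn u + e) by apply: ler_wpM2l.
have : hn u * hn (u - S w) <= hn u * e by apply: ler_wpM2l; [exact: hn_ge0 | exact: ltW].
lra.
Qed.

Lemma re_zero v : (forall x, re x v = 0) -> v = 0.
Proof. by move=> h; apply: re_eq0; apply: h. Qed.

Lemma D_exists : exists D, bounded_op ip D /\
  (forall x, Ts (S x) = S (D x)) /\ (forall x, KS (D x)).
Proof.
have [Y hY] := choice hT.2.
pose D0 x := P (Y x).
have SD : forall x, S (D0 x) = Ts (S x) by move=> x; rewrite /D0 SP hY.
have KD : forall x, KA (D0 x) by move=> x; exact: PK.
have lD : linop D0.
  move=> a x y; apply/eqP; rewrite -subr_eq0; apply/eqP; apply: KA_ker.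
    by apply: KA_sub'; [exact: KD | apply: KA_sub; exact: KD].
  by rewrite (linB lS) lS !SD lS lTs subrr.
have key : forall x w, re x (S (T w)) = re (S w) (D0 x).
  by move=> x w; rewrite /re -sS [ip (S x) _]ipC Re_conj adjT -SD sS.
have hV : forall x, exists k : R, forall v, (fun v => exists2 w, hn (S w) <= 1 & v = S (T w)) v ->
    `|re x v| <= k.
  move=> x; exists (hn (D0 x)) => _ [w hw ->]; rewrite key.
  apply: le_trans (CS _ _) _; rewrite ler_piMl ?hn_ge0 //.
have [C hC] := weak_bounded hV.
pose C' := Num.max C 0.
have C'0 : 0 <= C' by rewrite le_max lexx orbT.
have hST : forall w, hn (S (T w)) <= C' * hn (S w).
  move=> w; case: (eqVneq (hn (S w)) 0) => [h0|hne].
    have Sw0 := hn_eq0 h0.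
    suff -> : S (T w) = 0 by rewrite hn0 h0 mulr0.
    by apply: re_zero => x; rewrite key Sw0 re0l.
  have hpos : 0 < hn (S w) by rewrite lt_def hne hn_ge0.
  pose w' := (((hn (S w))^-1)%:C)%C *: w.
  have h1 : hn (S w') = 1.
    by rewrite /w' (linZ lS) hnR ger0_norm ?invr_ge0 ?hn_ge0 // mulVf.
  have h1' : hn (S w') <= 1 by rewrite h1.
  have h2 := hC _ (ex_intro2 _ _ w' h1' erefl).
  move: h2; rewrite /w' (linZ lT) (linZ lS) hnR ger0_norm ?invr_ge0 ?hn_ge0 //.
  rewrite ler_pdivrMl // => h2; apply: le_trans h2 _; rewrite mulrC.
  by apply: ler_wpM2r; [exact: hn_ge0 | rewrite le_max lexx].
have bD : bounded_op ip D0.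
  split => //; exists C' => x; rewrite mulrC.
  apply: approx; [exact: KD | by rewrite mulr_ge0 ?hn_ge0 |].
  move=> w; rewrite reC -key; apply: le_trans (CS' _ _) _.
  rewrite -mulrA; apply: ler_wpM2l; [exact: hn_ge0 | exact: hST].
by exists D0; split => //; split => x; [rewrite SD | apply/KA_KS].
Qed.

Local Notation D := (diamond ip A T).

Lemma D_spec : bounded_op ip D /\ (forall x, Ts (S x) = S (D x)) /\ (forall x, KS (D x)).
Proof.
have [D0 hD0] := D_exists.
exact: (ClassicalEpsilon.epsilon_spec (inhabits T) (fun S' => bounded_op ip S' /\
    (forall x, adj ip T (sqrt_op ip A x) = sqrt_op ip A (S' x)) /\
    (forall x, hclosure ip (range (sqrt_op ip A)) (S' x))) (ex_intro _ D0 hD0)).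
Qed.

Let bD : bounded_op ip D := D_spec.1.
Let lD : linop D := bD.1.
Let SD : forall x, Ts (S x) = S (D x) := D_spec.2.1.
Let hDs := adj_spec bD.
Local Notation Ds := (adj ip D).
Let adjD : forall x y, ip (D x) y = ip x (Ds y) := hDs.2.

Lemma DsS x : Ds (S x) = S (T x).
Proof.
apply: ip_inj_r => z; rewrite -adjD -sS -SD.
by rewrite ipC -adjT -ipC sS.
Qed.

Lemma E_exists : exists E, bounded_op ip E /\
  (forall x, Ds (S x) = S (E x)) /\ (forall x, KS (E x)).
Proof.
exists (fun x => P (T x)); split; last split.
- have [_ [M [M0 hM]]] := bounded_pos bT.
  split; first by move=> a x y; rewrite lT lP.
  exists M => x; apply: le_trans (P_norm _) (hM x).
- by move=> x; rewrite SP DsS.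
- by move=> x; apply/KA_KS; exact: PK.
Qed.

Local Notation E := (diamond ip A D).

Lemma E_spec : bounded_op ip E /\ (forall x, Ds (S x) = S (E x)) /\ (forall x, KS (E x)).
Proof.
have [E0 hE0] := E_exists.
exact: (ClassicalEpsilon.epsilon_spec (inhabits D) (fun S' => bounded_op ip S' /\
    (forall x, adj ip D (sqrt_op ip A x) = sqrt_op ip A (S' x)) /\
    (forall x, hclosure ip (range (sqrt_op ip A)) (S' x))) (ex_intro _ E0 hE0)).
Qed.

Lemma E_eq x : E x = P (T x).
Proof.
have [bE [SE KE]] := E_spec.
apply/eqP; rewrite -subr_eq0; apply/eqP; apply: KA_ker.
  by apply: KA_sub'; [apply/KA_KS; exact: KE | exact: PK].
by rewrite (linB lS) -SE SP DsS subrr.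
Qed.

Lemma PTP x : P (T x) = P (T (P x)).
Proof. by apply: P_eq; rewrite -!DsS SP. Qed.

Lemma preimg_spec y : S (preimg ip A (S y)) = S y.
Proof.
exact: (ClassicalEpsilon.epsilon_spec (inhabits (S y)) (fun x => sqrt_op ip A x = S y)
  (ex_intro _ y erefl)).
Qed.

Lemma Rnorm_S y : Rnorm ip A (S y) = hn (P y).
Proof. by rewrite /Rnorm (P_eq (preimg_spec y)). Qed.

Lemma Rnorm_Tb y : Rnorm ip A (Tb ip A T (S y)) = hn (P (T y)).
Proof.
rewrite /Tb Rnorm_S PTP (P_eq (preimg_spec y)) -PTP //.
Qed.

Lemma claim1 : Tb_norm ip A T = opnorm ip E.
Proof.
rewrite /Tb_norm /opnorm; congr sup; apply/seteqP; split => r /=.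
  move=> [u [[y _ <-] hu] <-]; rewrite Rnorm_S in hu.
  exists (P y) => //; rewrite E_eq Rnorm_Tb -PTP //.
move=> [x hx <-]; exists (S x); last by rewrite Rnorm_Tb E_eq.
split; first by exists x.
by rewrite Rnorm_S; apply: le_trans (P_norm x) hx.
Qed.

Lemma Anorm_S z : Anorm ip A z = hn (S z).
Proof. by rewrite /Anorm /hnorm -SS sS. Qed.

Lemma ipTs a b : ip (Ts a) b = ip a (T b).
Proof. by rewrite ipC -adjT -ipC. Qed.

Lemma claim2 : opnorm ip E = Aopnorm ip A D.
Proof.
rewrite /opnorm /Aopnorm.
set F := (X in sup X = _); set G := (X in _ = sup X).
have [_ [M [M0 hM]]] := bounded_pos bT.
have Fb : forall r, F r -> r <= M.
  move=> _ [x hx <-]; rewrite E_eq; apply: le_trans (P_norm _) _.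
  apply: le_trans (hM x) _; rewrite ler_piMr //.
have F0 : F 0.
  by exists 0; [rewrite /mkset hn0 ler01 | rewrite E_eq (lin0 lT) (lin0 lP) hn0].
have Fne : exists r, F r by exists 0.
have s0 : 0 <= sup F := sup_ub Fb F0.
have fscale : forall y, hn (P (T y)) <= sup F * hn y.
  move=> y; case: (eqVneq (hn y) 0) => [h0|hne].
    by rewrite (hn_eq0 h0) (lin0 lT) (lin0 lP) !hn0 mulr0.
  have hpos : 0 < hn y by rewrite lt_def hne hn_ge0.
  pose y' := (((hn y)^-1)%:C)%C *: y.
  have hy' : hn y' <= 1 by rewrite /y' hnR ger0_norm ?invr_ge0 ?hn_ge0 // mulVf.
  have := sup_ub Fb (ex_intro2 _ _ y' hy' erefl).
  rewrite E_eq /y' (linZ lT) (linZ lP) hnR ger0_norm ?invr_ge0 ?hn_ge0 //.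
  by rewrite ler_pdivrMl // mulrC.
have Gb : forall r, G r -> r <= sup F.
  move=> _ [x [Kx hx] <-]; rewrite Anorm_S -SD; rewrite Anorm_S in hx.
  case: (eqVneq (hn (Ts (S x))) 0) => [->|hne] //.
  have hpos : 0 < hn (Ts (S x)) by rewrite lt_def hne hn_ge0.
  suff : hn (Ts (S x)) ^+ 2 <= sup F * hn (Ts (S x)) by rewrite expr2 ler_pM2r.
  rewrite hn_sq {1}/re ipTs ip_P_left; last exact: rangeS_KA.
  apply: le_trans (CS' _ _) _; rewrite hx mul1r; exact: fscale.
have Gne : exists r, G r.
  have [x1 hx1] := hA0.
  pose w := S x1.
  have Sw : S w != 0 by apply/eqP; rewrite /w SS.
  have hpos : 0 < hn (S w).
    by rewrite lt_def hn_ge0 andbT; apply/eqP => /hn_eq0 h; move: Sw; rewrite h eqxx.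
  exists (Anorm ip A (D ((((hn (S w))^-1)%:C)%C *: P w))).
  exists ((((hn (S w))^-1)%:C)%C *: P w) => //; split.
    by rewrite -[_ *: P w]addr0; apply: KA_sub; [exact: PK | exact: KA0].
  by rewrite Anorm_S (linZ lS) SP hnR ger0_norm ?invr_ge0 ?hn_ge0 // mulVf // gt_eqF.
have [g0 Gg0] := Gne.
have a0 : 0 <= sup G.
  apply: le_trans (sup_ub Gb Gg0); case: Gg0 => x _ <-; rewrite Anorm_S; exact: hn_ge0.
have TsS : forall w, hn (Ts (S w)) <= sup G * hn (S w).
  move=> w; case: (eqVneq (hn (S w)) 0) => [h0|hne].
    by rewrite (hn_eq0 h0) (lin0 lTs) !hn0 mulr0.
  have hpos : 0 < hn (S w) by rewrite lt_def hne hn_ge0.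
  pose x' := (((hn (S w))^-1)%:C)%C *: P w.
  have Kx' : KA x' by rewrite -[x']addr0; apply: KA_sub; [exact: PK | exact: KA0].
  have hx' : Anorm ip A x' = 1.
    by rewrite Anorm_S (linZ lS) SP hnR ger0_norm ?invr_ge0 ?hn_ge0 // mulVf // gt_eqF.
  have := sup_ub Gb (ex_intro2 _ _ x' (conj Kx' hx') erefl).
  rewrite Anorm_S -SD /x' (linZ lS) SP (linZ lTs) hnR ger0_norm ?invr_ge0 ?hn_ge0 //.
  by rewrite ler_pdivrMl // mulrC.
apply/le_anti/andP; split; last exact: sup_le Gne Gb.
apply: sup_le Fne _ => _ [x hx <-]; rewrite E_eq.
apply: approx; [exact: PK | exact: a0 |] => w.
have -> : re (P (T x)) (S w) = re (T x) (S w).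
  rewrite /re; congr complex.Re; apply/eqP; rewrite -subr_eq0 -ipBl; apply/eqP.
  rewrite -opprB ipNl Porth ?oppr0 //; exact: rangeS_KA.
rewrite /re adjT -/(re x (Ts (S w))); apply: le_trans (CS' _ _) _.
apply: le_trans (_ : hn (Ts (S w)) <= _); last exact: TsS.
by rewrite ler_piMl ?hn_ge0.
Qed.

End Main.


End Basic.

Theorem mainTheorem5 (R : realType) (H : lmodType R[i]) (ip : H -> H -> R[i])
  (hH : is_hilbert ip) (A T : H -> H)
  (hA : positive_op ip A) (hA0 : exists x : H, A x <> 0)
  (hT : in_BAhalf ip A T) :
  Tb_norm ip A T = opnorm ip (diamond ip A (diamond ip A T)) /\
  opnorm ip (diamond ip A (diamond ip A T)) = Aopnorm ip A (diamond ip A T).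
Proof.
split; [exact: (claim1 hH hA hT) | exact: (claim2 hH hA hA0 hT)].
Qed.
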